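(* Let $\gamma>1$ and let the pressure function of the ideal MHD equations be $$p(q)=(\gamma-1)\left(\mathcal{E}-\frac{(\rho u_x)^2+(\rho u_y)^2+(\rho u_z)^2}{2\rho}-\frac{1}{2}\left(B_x^2+B_y^2+B_z^2\right)\right)$$ for a state vector $q=(\rho,\rho u_x,\rho u_y,\rho u_z,\mathcal{E},B_x,B_y,B_z)\in\mathbb{R}^8$ with $\rho>0$. Fix a grid index $j$, a ratio $\lambda=\Delta t/\Delta x>0$, a state $q^n_j\in\mathbb{R}^8$, and vectors $\hat{\mathbf F}^{rk}_{j\pm\frac12},\hat{\mathbf f}_{j\pm\frac12}\in\mathbb{R}^8$. For $\overrightarrow{\theta}=(\theta_{j-\frac12},\theta_{j+\frac12})\in\mathbb{R}^2$ define $$q^{n+1}_j(\overrightarrow{\theta})=q^n_j-\lambda\left(\tilde{\mathbf F}_{j+\frac12}-\tilde{\mathbf F}_{j-\frac12}\right),\qquad \tilde{\mathbf F}_{j\pm\frac12}=\theta_{j\pm\frac12}\left(\hat{\mathbf F}^{rk}_{j\pm\frac12}-\hat{\mathbf f}_{j\pm\frac12}\right)+\hat{\mathbf f}_{j\pm\frac12}.$$ Let $S_{\rho,I_j}=[0,\Lambda^\rho_{-\frac12,I_j}]\times[0,\Lambda^\rho_{+\frac12,I_j}]$ be the rectangle defined in the context below. Then for every $\alpha\in[0,1]$ and every $\overrightarrow{\theta}^1,\overrightarrow{\theta}^2\in S_{\rho,I_j}$, $$p\left(q^{n+1}_j\left(\alpha\overrightarrow{\theta}^1+(1-\alpha)\overrightarrow{\theta}^2\right)\right)\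 \ge\ \alpha\, p\left(q^{n+1}_j\left(\overrightarrow{\theta}^1\right)\right)+(1-\alpha)\,p\left(q^{n+1}_j\left(\overrightarrow{\theta}^2\right)\right).$$
   Context: Setting: a finite difference scheme for the 1D ideal MHD equations $q_t+\mathbf f(q)_x=0$ on a uniform grid, where $\hat{\mathbf F}^{rk}_{j+\frac12}$ is a high-order (Runge–Kutta combined WENO) numerical flux and $\hat{\mathbf f}_{j+\frac12}$ is the first-order Lax–Friedrichs flux. Denote by $f^\rho_{j\pm\frac12}$ and $\hat f^\rho_{j\pm\frac12}$ the first (density) components of $\hat{\mathbf F}^{rk}_{j\pm\frac12}$ and $\hat{\mathbf f}_{j\pm\frac12}$, and let $\rho^n_j$ be the first component of $q^n_j$. Set $\Gamma_j=\rho^n_j-\lambda(\hat f^\rho_{j+\frac12}-\hat f^\rho_{j-\frac12})$ (the density of the first-order Lax–Friedrichs update) and let $\epsilon^{n+1}_\rho>0$ be a lower bound with $\Gamma_j\ge\epsilon^{n+1}_\rho$ (in the paper $\epsilon^{n+1}_\rho=\min(\min_j\Gamma_j,\epsilon_0)$ with $\epsilon_0=10^{-13}$, the Lax–Friedrichs densities being positive). Let $F_{j\pm\frac12}=f^\rho_{j\pm\frac12}-\hat f^\rho_{j\pm\frac12}$. The bounds $(\Lambda^\rho_{-\frac12,I_j},\Lambda^\rho_{+\frac12,I_j})$ are defined by: (i) if $F_{j-\frac12}\ge0$ and $F_{j+\frac12}\le0$: $(1,1)$; (ii) if $F_{j-\frac12}\ge0$ and $F_{j+\frac12}>0$: $\left(1,\min\left(1,\frac{\epsilon^{n+1}_\rho-\Gamma_j}{-\lambda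 F_{j+\frac12}}\right)\right)$; (iii) if $F_{j-\frac12}<0$ and $F_{j+\frac12}\le0$: $\left(\min\left(1,\frac{\epsilon^{n+1}_\rho-\Gamma_j}{\lambda F_{j-\frac12}}\right),1\right)$; (iv) if $F_{j-\frac12}<0$ and $F_{j+\frac12}>0$: $(1,1)$ if $\lambda F_{j-\frac12}-\lambda F_{j+\frac12}\ge\epsilon^{n+1}_\rho-\Gamma_j$, and otherwise both bounds equal $\frac{\epsilon^{n+1}_\rho-\Gamma_j}{\lambda F_{j-\frac12}-\lambda F_{j+\frac12}}$. With these bounds, the density (first component) of $q^{n+1}_j(\overrightarrow\theta)$ is at least $\epsilon^{n+1}_\rho$ for all $\overrightarrow\theta\in S_{\rho,I_j}$. *)

(* Defs.v *)
From HB Require Import structures.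
From mathcomp Require Import all_boot all_order all_algebra.
Set Implicit Arguments. Unset Strict Implicit. Unset Printing Implicit Defensive.
Import Order.TTheory GRing.Theory Num.Theory.
Local Open Scope ring_scope.

Section MHD.
Variable R : realFieldType.

(* component k (0-based) of a state vector q = (rho, rho ux, rho uy, rho uz, E, Bx, By, Bz) *)
Definition comp (q : 'rV[R]_8) (k : nat) : R := q 0 (inord k).

Definition pressure (gamma : R) (q : 'rV[R]_8) : R :=
  (gamma - 1) * (comp q 4
     - (comp q 1 ^+ 2 + comp q 2 ^+ 2 + comp q 3 ^+ 2) / (2 * comp q 0)
     - (comp q 5 ^+ 2 + comp q 6 ^+ 2 + comp q 7 ^+ 2) / 2).

Definition Ftilde (theta : R) (Frk fh : 'rV[R]_8) : 'rV[R]_8 :=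
  theta *: (Frk - fh) + fh.

Definition qnext (lam : R) (qn Frk_m Frk_p fh_m fh_p : 'rV[R]_8) (th : R * R)
  : 'rV[R]_8 :=
  qn - lam *: (Ftilde th.2 Frk_p fh_p - Ftilde th.1 Frk_m fh_m).

(* Gamma_j : density of the first-order Lax-Friedrichs update *)
Definition GammaLF (lam : R) (qn fh_m fh_p : 'rV[R]_8) : R :=
  comp qn 0 - lam * (comp fh_p 0 - comp fh_m 0).

Definition Lambda_rho (lam eps : R) (qn Frk_m Frk_p fh_m fh_p : 'rV[R]_8) : R * R :=
  let G := GammaLF lam qn fh_m fh_p in
  let Fm := comp Frk_m 0 - comp fh_m 0 in
  let Fp := comp Frk_p 0 - comp fh_p 0 in
  if (0 <= Fm) then
    (if Fp <= 0 then (1, 1)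
     else (1, Num.min 1 ((eps - G) / (- (lam * Fp)))))
  else
    (if Fp <= 0 then (Num.min 1 ((eps - G) / (lam * Fm)), 1)
     else if eps - G <= lam * Fm - lam * Fp then (1, 1)
     else ((eps - G) / (lam * Fm - lam * Fp), (eps - G) / (lam * Fm - lam * Fp))).

Definition in_S_rho (lam eps : R) (qn Frk_m Frk_p fh_m fh_p : 'rV[R]_8) (th : R * R) : Prop :=
  let L := Lambda_rho lam eps qn Frk_m Frk_p fh_m fh_p in
  0 <= th.1 <= L.1 /\ 0 <= th.2 <= L.2.

End MHD.

(* Main.v *)
Require Import Defs.
From HB Require Import structures.
From mathcomp Require Import all_boot all_order all_algebra.
From mathcomp Require Import ring lra.
Import Order.TTheory GRing.Theory Num.Theory.
Local Notation comp := Defs.comp.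
Local Open Scope ring_scope.

Lemma persp (R : realFieldType) (a b x y r s : R) :
  0 <= a -> 0 <= b -> a + b = 1 -> 0 < r -> 0 < s ->
  (a*x+b*y)^+2/(a*r+b*s) <= a*(x^+2/r) + b*(y^+2/s).
Proof.
move=> ha hb hab hr hs.
have hd : 0 < a*r+b*s.
  have [a0|ha0] := eqVneq a 0.
    have -> : b = 1 by lra.
    by rewrite a0 mul0r add0r mul1r.
  have : 0 < a by rewrite lt_def ha0 ha.
  move=> hap; have h1 := mulr_gt0 hap hr; have h2 := mulr_ge0 hb (ltW hs); lra.
rewrite -subr_ge0.
have -> : a*(x^+2/r) + b*(y^+2/s) - (a*x+b*y)^+2/(a*r+b*s)
   = a*b*(x*s-y*r)^+2/(r*s*(a*r+b*s)).
  rewrite (_ : b = 1 - a); last by lra.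
  field; rewrite (_ : 1 - a = b); last by lra.
  by rewrite !gt_eqF.
apply: divr_ge0; first by apply: mulr_ge0; [apply: mulr_ge0|apply: sqr_ge0].
by apply: ltW; apply: mulr_gt0 => //; apply: mulr_gt0.
Qed.

Lemma sqconv (R : realFieldType) (a b x y : R) :
  0 <= a -> 0 <= b -> a + b = 1 ->
  (a*x+b*y)^+2 <= a*x^+2 + b*y^+2.
Proof.
move=> ha hb hab; rewrite -subr_ge0.
have -> : a*x^+2 + b*y^+2 - (a*x+b*y)^+2 = a*b*(x-y)^+2.
  rewrite (_ : b = 1 - a); last by lra. ring.
by apply: mulr_ge0; [apply: mulr_ge0|apply: sqr_ge0].
Qed.

Lemma comp_qnext (R : realFieldType) lam (qn Frk_m Frk_p fh_m fh_p : 'rV[R]_8) (th : R * R) (k : nat) :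
  comp (qnext lam qn Frk_m Frk_p fh_m fh_p th) k =
  comp qn k - lam * ((th.2 * (comp Frk_p k - comp fh_p k) + comp fh_p k)
                    - (th.1 * (comp Frk_m k - comp fh_m k) + comp fh_m k)).
Proof. by rewrite /Defs.comp /qnext /Ftilde !mxE. Qed.

Lemma dens (R : realFieldType) (lam eps : R) (qn Frk_m Frk_p fh_m fh_p : 'rV[R]_8) th :
  0 < lam -> eps <= GammaLF lam qn fh_m fh_p ->
  in_S_rho lam eps qn Frk_m Frk_p fh_m fh_p th ->
  eps <= comp (qnext lam qn Frk_m Frk_p fh_m fh_p th) 0.
Proof.
move=> hl hG; rewrite /in_S_rho /Lambda_rho comp_qnext.
move: hG; rewrite /GammaLF.
set G := comp qn 0 - _.
set Fm := comp Frk_m 0 - comp fh_m 0.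
set Fp := comp Frk_p 0 - comp fh_p 0.
case: th => t1 t2 /=.
have -> : comp qn 0 - lam * (t2 * Fp + comp fh_p 0 - (t1 * Fm + comp fh_m 0))
  = G - lam * t2 * Fp + lam * t1 * Fm by rewrite /G; ring.
move=> hG.
case: (lerP 0 Fm) => hFm; case: (lerP Fp 0) => hFp /=.
- move=> [/andP[t10 t11] /andP[t20 t21]].
  have := mulr_ge0 (mulr_ge0 (ltW hl) t10) hFm.
  have := mulr_le0_ge0 hFp (mulr_ge0 (ltW hl) t20).
  have : Fp * (lam * t2) = lam * t2 * Fp by ring.
  lra.
- move=> [/andP[t10 t11] /andP[t20]].
  rewrite le_min => /andP[_].
  have hd : 0 < lam * Fp by apply: mulr_gt0.
  rewrite ler_ndivlMr ?oppr_lt0 // => h.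
  have := mulr_ge0 (mulr_ge0 (ltW hl) t10) hFm.
  have : t2 * - (lam * Fp) = - (lam * t2 * Fp) by ring.
  lra.
- move=> [/andP[t10] + /andP[t20 t21]].
  rewrite le_min => /andP[_].
  have hd : lam * Fm < 0 by rewrite pmulr_rlt0.
  rewrite ler_ndivlMr // => h.
  have := mulr_le0_ge0 hFp (mulr_ge0 (ltW hl) t20).
  have : t1 * (lam * Fm) = lam * t1 * Fm by ring.
  have : Fp * (lam * t2) = lam * t2 * Fp by ring.
  lra.
- case: ifP => hc /=.
  + move=> [/andP[t10 t11] /andP[t20 t21]].
    have h1 : 0 <= lam * (1 - t1) * (- Fm).
      by apply: mulr_ge0; [apply: mulr_ge0; lra|lra].
    have h2 : 0 <= lam * (1 - t2) * Fp.
      by apply: mulr_ge0; [apply: mulr_ge0; lra|lra].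
    have : lam * (1 - t1) * (- Fm) = lam * t1 * Fm - lam * Fm by ring.
    have : lam * (1 - t2) * Fp = lam * Fp - lam * t2 * Fp by ring.
    lra.
  + move: hc => /negbT; rewrite -ltNge => hc.
    set c := (eps - G) / _.
    move=> [/andP[t10 t11] /andP[t20 t21]].
    have hd : lam * Fm - lam * Fp < 0.
      have : lam * Fm < 0 by rewrite pmulr_rlt0. have := mulr_gt0 hl hFp; lra.
    have hce : c * (lam * Fm - lam * Fp) = eps - G by rewrite /c divfK // ltr0_neq0.
    have h1 : 0 <= lam * (c - t1) * (- Fm).
      by apply: mulr_ge0; [apply: mulr_ge0; lra|lra].
    have h2 : 0 <= lam * (c - t2) * Fp.
      by apply: mulr_ge0; [apply: mulr_ge0; lra|lra].
    have : lam * (c - t1) * (- Fm) = lam * t1 * Fm - c * (lam * Fm) by ring.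
    have : lam * (c - t2) * Fp = c * (lam * Fp) - lam * t2 * Fp by ring.
    have : c * (lam * Fm - lam * Fp) = c * (lam * Fm) - c * (lam * Fp) by ring.
    lra.
Qed.

Theorem lemma1 (R : realFieldType) (gamma lam eps : R)
  (qn Frk_m Frk_p fh_m fh_p : 'rV[R]_8)
  (hgamma : 1 < gamma) (hlam : 0 < lam) (heps : 0 < eps)
  (hGamma : eps <= GammaLF lam qn fh_m fh_p)
  (alpha : R) (halpha : 0 <= alpha <= 1) (th1 th2 : R * R)
  (h1 : in_S_rho lam eps qn Frk_m Frk_p fh_m fh_p th1)
  (h2 : in_S_rho lam eps qn Frk_m Frk_p fh_m fh_p th2) :
  alpha * pressure gamma (qnext lam qn Frk_m Frk_p fh_m fh_p th1)
  + (1 - alpha) * pressure gamma (qnext lam qn Frk_m Frk_p fh_m fh_p th2)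
  <= pressure gamma (qnext lam qn Frk_m Frk_p fh_m fh_p
        (alpha * th1.1 + (1 - alpha) * th2.1, alpha * th1.2 + (1 - alpha) * th2.2)).
Proof.
have r1 := @dens R lam eps qn Frk_m Frk_p fh_m fh_p th1 hlam hGamma h1.
have r2 := @dens R lam eps qn Frk_m Frk_p fh_m fh_p th2 hlam hGamma h2.
set q1 := qnext _ _ _ _ _ _ th1 in r1 *.
set q2 := qnext _ _ _ _ _ _ th2 in r2 *.
set qc := qnext _ _ _ _ _ _ _.
have hc : forall k, comp qc k = alpha * comp q1 k + (1 - alpha) * comp q2 k.
  by move=> k; rewrite /qc /q1 /q2 !comp_qnext /=; ring.
rewrite /pressure !hc.
move: r1 r2; set r := comp q1 0; set s := comp q2 0 => r1 r2.
have rp : 0 < r by lra.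
have sp : 0 < s by lra.
case/andP: halpha => ha0 ha1.
have hb : 0 <= 1 - alpha by lra.
have hab : alpha + (1 - alpha) = 1 by ring.
have hd : 0 < alpha * r + (1 - alpha) * s.
  have := mulr_ge0 ha0 (ltW rp); have := mulr_ge0 hb (ltW sp).
  have : alpha * r + (1 - alpha) * s - s = alpha * (r - s) by ring.
  move=> e x y. case: (lerP r s) => hrs.
  - have : 0 <= (1 - alpha) * (s - r) by apply: mulr_ge0; lra.
    have : alpha * r + (1 - alpha) * s - r = (1 - alpha) * (s - r) by ring. lra.
  - have : 0 <= alpha * (r - s) by apply: mulr_ge0; lra. lra.
have split3 : forall (x y z w : R), 0 < w ->
    (x ^+ 2 + y ^+ 2 + z ^+ 2) / (2 * w) = (x^+2/w + y^+2/w + z^+2/w) / 2.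
  by move=> x y z w hw; field; rewrite gt_eqF.
rewrite !split3 //.
have k1 := @persp R alpha (1 - alpha) (comp q1 1) (comp q2 1) r s ha0 hb hab rp sp.
have k2 := @persp R alpha (1 - alpha) (comp q1 2) (comp q2 2) r s ha0 hb hab rp sp.
have k3 := @persp R alpha (1 - alpha) (comp q1 3) (comp q2 3) r s ha0 hb hab rp sp.
have b5 := @sqconv R alpha (1 - alpha) (comp q1 5) (comp q2 5) ha0 hb hab.
have b6 := @sqconv R alpha (1 - alpha) (comp q1 6) (comp q2 6) ha0 hb hab.
have b7 := @sqconv R alpha (1 - alpha) (comp q1 7) (comp q2 7) ha0 hb hab.
rewrite mulrCA [(1 - alpha) * ((gamma - 1) * _)]mulrCA -mulrDr.
apply: ler_wpM2l; first lra.
lra.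
Qed.
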